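(* Let $\bm{\mu}_0,\bm{\mu}_1\in\mathbb{R}^d$, $\epsilon>0$, and define the GLRT costs $C_k(\mathbf{x})=\|g_\epsilon(\mathbf{x}-\bm{\mu}_k)\|_2^2$ for $k=0,1$. Set $\mathbf{e}^*=-\epsilon\,\mathrm{sign}(\bm{\mu}_0-\bm{\mu}_1)$, with $\mathrm{sign}$ applied coordinate-wise. Then for every $\mathbf{n}\in\mathbb{R}^d$ and every $\mathbf{e}\in\mathbb{R}^d$ with $\|\mathbf{e}\|_\infty\le\epsilon$, $$C_1(\bm{\mu}_0+\mathbf{e}+\mathbf{n})-C_0(\bm{\mu}_0+\mathbf{e}+\mathbf{n})\ \ge\ C_1(\bm{\mu}_0+\mathbf{e}^*+\mathbf{n})-C_0(\bm{\mu}_0+\mathbf{e}^*+\mathbf{n}).$$ Consequently, under hypothesis $\mathcal{H}_0$, where $\mathbf{X}=\bm{\mu}_0+\mathbf{e}+\mathbf{N}$ with $\mathbf{N}\sim\mathcal{N}(\mathbf{0},\sigma^2 I_d)$ and $\sigma>0$: (i) for every realization $\mathbf{n}$, if some admissible $\mathbf{e}$ makes $C_1<C_0$, then $\mathbf{e}^*$ also makes $C_1<C_0$ (noise-aware optimality); (ii) $\mathbf{e}^*$ maximizes $\Pr(C_1(\mathbf{X})<C_0(\mathbf{X}))$ over all $\mathbf{e}$ with $\|\mathbf{e}\|_\infty\le\epsilon$ (noise-agnostic optimality). Symmetrically, under $\mathcal{H}_1$ the attack $-\epsilon\,\mathrm{sign}(\bm{\mu}_1-\bm{\mu}_0)$ is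 worst-case in both senses.
   Context: For $\epsilon>0$, $g_\epsilon(x)=\mathrm{sign}(x)\max(0,|x|-\epsilon)$ with $\mathrm{sign}(0)=0$, applied coordinate-wise. The GLRT classifier decides $\mathcal{H}_1$ when $C_1<C_0$. An attack is a vector $\mathbf{e}$ with $\|\mathbf{e}\|_\infty\le\epsilon$, which may depend on the true hypothesis. *)

(* Defs.v *)
From HB Require Import structures.
From mathcomp Require Import all_boot all_order all_algebra.
From mathcomp Require Import all_classical all_reals all_analysis.
Set Implicit Arguments. Unset Strict Implicit. Unset Printing Implicit Defensive.
Import Order.TTheory GRing.Theory Num.Theory.
Local Open Scope classical_set_scope.
Local Open Scope ring_scope.

(* coordinate-wise sign, with sign 0 = 0 *)
Definition sgnr {R : realType} (x : R) : R := Num.sg x.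

Definition g_eps {R : realType} (eps x : R) : R :=
  sgnr x * Num.max 0 (`|x| - eps).

Definition cost {R : realType} {d : nat} (eps : R) (mu x : 'rV[R]_d) : R :=
  \sum_(i < d) (g_eps eps (x ord0 i - mu ord0 i)) ^+ 2.

Definition attack {R : realType} {d : nat} (eps : R) (a b : 'rV[R]_d) : 'rV[R]_d :=
  \row_(i < d) (- (eps * sgnr (a ord0 i - b ord0 i))).

Definition admissible {R : realType} {d : nat} (eps : R) (e : 'rV[R]_d) : Prop :=
  forall i : 'I_d, `|e ord0 i| <= eps.

Definition mutually_independent {dT : measure_display} {T : measurableType dT}
  {R : realType} (P : probability T R) {d : nat} (N : 'I_d -> {RV P >-> R}) : Prop :=
  forall B : 'I_d -> set R, (forall i, measurable (B i)) ->
    P (\bigcap_(i in [set: 'I_d]) (N i @^-1` B i)) =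
    (\prod_(i < d) P (N i @^-1` B i))%E.

(* N ~ N(0, sigma^2 I_d): i.i.d. centered normal coordinates with std sigma *)
Definition iid_gaussian {dT : measure_display} {T : measurableType dT}
  {R : realType} (P : probability T R) {d : nat} (sigma : R)
  (N : 'I_d -> {RV P >-> R}) : Prop :=
  (forall i A, measurable A -> distribution P (N i) A = normal_prob 0 sigma A)
  /\ mutually_independent N.

Definition noise_vec {dT : measure_display} {T : measurableType dT}
  {R : realType} {P : probability T R} {d : nat} (N : 'I_d -> {RV P >-> R})
  (w : T) : 'rV[R]_d := \row_(i < d) N i w.

(* Main.v *)
Require Import Defs.
From HB Require Import structures.
From mathcomp Require Import all_boot all_order all_algebra.
From mathcomp Require Import all_classical all_reals all_analysis.
From mathcomp Require Import lra ring.
Import Order.TTheory GRing.Theory Num.Theory.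
Local Open Scope classical_set_scope.
Local Open Scope ring_scope.

Section S.
Variable R : realType.
Definition rr (y : R) := (Num.max 0 y) ^+ 2.
Lemma rr_mono (s t a : R) : s <= t -> 0 <= a -> rr (s + a) - rr s <= rr (t + a) - rr t.
Proof.
move=> st a0; rewrite /rr.
case: (lerP 0 s) => hs; case: (lerP 0 t) => ht;
case: (lerP 0 (s+a)) => hsa; case: (lerP 0 (t+a)) => hta;
rewrite ?(max_r hs) ?(max_l (ltW hs)) ?(max_r ht) ?(max_l (ltW ht))
  ?(max_r hsa) ?(max_l (ltW hsa)) ?(max_r hta) ?(max_l (ltW hta)); nra.
Qed.

Lemma g_sq (eps x : R) : 0 < eps ->
  g_eps eps x ^+ 2 = rr (x - eps) + rr (- x - eps).
Proof.
move=> he; rewrite /g_eps /sgnr /rr.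
have [x0|x0|->] := ltrgtP x 0.
- rewrite ltr0_sg // ltr0_norm //.
  case: (lerP 0 (x - eps)) => h1; case: (lerP 0 (- x - eps)) => h2;
  rewrite ?(max_r h1) ?(max_l (ltW h1)) ?(max_r h2) ?(max_l (ltW h2)); nra.
- rewrite gtr0_sg // gtr0_norm //.
  case: (lerP 0 (x - eps)) => h1; case: (lerP 0 (- x - eps)) => h2;
  rewrite ?(max_r h1) ?(max_l (ltW h1)) ?(max_r h2) ?(max_l (ltW h2)); nra.
- have h : - eps <= 0 by lra.
  rewrite sgr0 mul0r oppr0 sub0r (max_l h); ring.
Qed.

Definition F (eps x : R) := g_eps eps x ^+ 2.

Lemma F_mono (eps s t a : R) : 0 < eps -> s <= t -> 0 <= a ->
  F eps (s + a) - F eps s <= F eps (t + a) - F eps t.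
Proof.
move=> he st a0; rewrite /F !g_sq //.
have h1 := rr_mono (s - eps) (t - eps) a.
have h2 := rr_mono (- t - a - eps) (- s - a - eps) a.
have E1 : s + a - eps = s - eps + a by ring.
have E2 : t + a - eps = t - eps + a by ring.
have E3 : - (s + a) - eps = - s - a - eps by ring.
have E4 : - (t + a) - eps = - t - a - eps by ring.
have E5 : - s - a - eps + a = - s - eps by ring.
have E6 : - t - a - eps + a = - t - eps by ring.
rewrite E5 E6 in h2; rewrite E1 E2 E3 E4.
have H1 : s - eps <= t - eps by lra.
have H2 : - t - a - eps <= - s - a - eps by lra.
move: (h1 H1 a0) (h2 H2 a0); lra.
Qed.

Lemma coord (eps a t e : R) : 0 < eps -> `|e| <= eps ->
  F eps (t + - (eps * sgnr a) + a) - F eps (t + - (eps * sgnr a))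
  <= F eps (t + e + a) - F eps (t + e).
Proof.
move=> he; rewrite /sgnr => /ler_normlP [h1 h2].
have [a0|a0|->] := ltrgtP a 0.
- rewrite ltr0_sg // mulrN1 opprK.
  have := F_mono eps (t + e + a) (t + eps + a) (- a) he.
  have E1 : t + e + a + - a = t + e by ring.
  have E2 : t + eps + a + - a = t + eps by ring.
  rewrite E1 E2.
  have H1 : t + e + a <= t + eps + a by lra.
  have H2 : 0 <= - a by lra.
  move=> /(_ H1 H2); lra.
- rewrite gtr0_sg // mulr1.
  have := F_mono eps (t - eps) (t + e) a he; lra.
- rewrite !addr0; lra.
Qed.

Lemma part1 (d : nat) (eps : R) (m0 m1 n e : 'rV[R]_d) : 0 < eps -> admissible eps e ->
  cost eps m1 (m0 + attack eps m0 m1 + n) - cost eps m0 (m0 + attack eps m0 m1 + n)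
  <= cost eps m1 (m0 + e + n) - cost eps m0 (m0 + e + n).
Proof.
move=> he H; rewrite /cost -!sumrB; apply: ler_sum => i _; rewrite !mxE.
have := @coord eps (m0 ord0 i - m1 ord0 i) (n ord0 i) (e ord0 i) he (H i).
rewrite /F.
set A := - (eps * sgnr (m0 ord0 i - m1 ord0 i)).
have E1 : m0 ord0 i + e ord0 i + n ord0 i - m1 ord0 i
   = n ord0 i + e ord0 i + (m0 ord0 i - m1 ord0 i) by ring.
have E2 : m0 ord0 i + e ord0 i + n ord0 i - m0 ord0 i = n ord0 i + e ord0 i by ring.
have E3 : m0 ord0 i + A + n ord0 i - m1 ord0 i
   = n ord0 i + A + (m0 ord0 i - m1 ord0 i) by ring.
have E4 : m0 ord0 i + A + n ord0 i - m0 ord0 i = n ord0 i + A by ring.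
by rewrite E1 E2 E3 E4.
Qed.

Lemma cost_meas (dT : measure_display) (T : measurableType dT)
  (P : probability T R) (d : nat) (N : 'I_d -> {RV P >-> R}) (eps : R) (c mu : 'rV[R]_d) :
  0 < eps -> measurable_fun setT (fun w => cost eps mu (c + noise_vec N w)).
Proof.
move=> he; rewrite /cost; apply: measurable_sum => i.
under eq_fun do rewrite !mxE g_sq //.
rewrite /rr.
apply: measurable_realfun.measurable_funD; apply: measurable_realfun.measurable_funX; apply: measurable_realfun.measurable_maxr;
  try exact: measurable_cst.
- apply: measurable_realfun.measurable_funB; last exact: measurable_cst.
  apply: measurable_realfun.measurable_funB; last exact: measurable_cst.
  apply: measurable_realfun.measurable_funD; first exact: measurable_cst.
  exact: measurable_funPT.
- apply: measurable_realfun.measurable_funB; last exact: measurable_cst.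
  apply: measurable_realfun.measurable_funN.
  apply: measurable_realfun.measurable_funB; last exact: measurable_cst.
  apply: measurable_realfun.measurable_funD; first exact: measurable_cst.
  exact: measurable_funPT.
Qed.

Lemma meas_lt (dT : measure_display) (T : measurableType dT) (f g : T -> R) :
  measurable_fun setT f -> measurable_fun setT g -> measurable [set w | f w < g w].
Proof.
move=> mf mg.
have hb : measurable [set true] by [].
have := measurable_realfun.measurable_fun_ltr mf mg measurableT hb.
by rewrite setTI /preimage /=; congr measurable; apply/funext => w /=; apply/propext; split => // /eqP.
Qed.

Lemma meas_le (dT : measure_display) (T : measurableType dT) (f g : T -> R) :
  measurable_fun setT f -> measurable_fun setT g -> measurable [set w | f w <= g w].
Proof.
move=> mf mg.
have hb : measurable [set true] by [].
have := measurable_realfun.measurable_fun_ler mf mg measurableT hb.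
by rewrite setTI /preimage /=; congr measurable; apply/funext => w /=; apply/propext; split => // /eqP.
Qed.

Lemma prob_le (dT : measure_display) (T : measurableType dT) (P : probability T R)
  (A B : set T) : measurable A -> measurable B -> (forall w, A w -> B w) -> (P A <= P B)%E.
Proof. by move=> mA mB AB; apply: le_measure; rewrite ?inE. Qed.
End S.

Theorem proposition2 (R : realType) (d : nat) (mu0 mu1 : 'rV[R]_d) (eps : R)
  (heps : 0 < eps) :
  (* H0 side, e* = -eps sign(mu0 - mu1) *)
  (forall n e : 'rV[R]_d, admissible eps e ->
     cost eps mu1 (mu0 + e + n) - cost eps mu0 (mu0 + e + n)
     >= cost eps mu1 (mu0 + attack eps mu0 mu1 + n)
        - cost eps mu0 (mu0 + attack eps mu0 mu1 + n))
  /\ (forall n e : 'rV[R]_d, admissible eps e ->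
     cost eps mu1 (mu0 + e + n) < cost eps mu0 (mu0 + e + n) ->
     cost eps mu1 (mu0 + attack eps mu0 mu1 + n)
       < cost eps mu0 (mu0 + attack eps mu0 mu1 + n))
  /\ (forall (dT : measure_display) (T : measurableType dT)
        (P : probability T R) (sigma : R) (N : 'I_d -> {RV P >-> R}),
      0 < sigma -> iid_gaussian sigma N ->
      forall e : 'rV[R]_d, admissible eps e ->
      (P [set w | (cost eps mu1 (mu0 + e + noise_vec N w)
                  < cost eps mu0 (mu0 + e + noise_vec N w))%R]
       <= P [set w | (cost eps mu1 (mu0 + attack eps mu0 mu1 + noise_vec N w)
                  < cost eps mu0 (mu0 + attack eps mu0 mu1 + noise_vec N w))%R])%E)
  (* H1 side, attack -eps sign(mu1 - mu0); decision H0 iff C_0 <= C_1 *)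
  /\ (forall n e : 'rV[R]_d, admissible eps e ->
     cost eps mu0 (mu1 + e + n) - cost eps mu1 (mu1 + e + n)
     >= cost eps mu0 (mu1 + attack eps mu1 mu0 + n)
        - cost eps mu1 (mu1 + attack eps mu1 mu0 + n))
  /\ (forall n e : 'rV[R]_d, admissible eps e ->
     cost eps mu0 (mu1 + e + n) <= cost eps mu1 (mu1 + e + n) ->
     cost eps mu0 (mu1 + attack eps mu1 mu0 + n)
       <= cost eps mu1 (mu1 + attack eps mu1 mu0 + n))
  /\ (forall (dT : measure_display) (T : measurableType dT)
        (P : probability T R) (sigma : R) (N : 'I_d -> {RV P >-> R}),
      0 < sigma -> iid_gaussian sigma N ->
      forall e : 'rV[R]_d, admissible eps e ->
      (P [set w | (cost eps mu0 (mu1 + e + noise_vec N w)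
                  <= cost eps mu1 (mu1 + e + noise_vec N w))%R]
       <= P [set w | (cost eps mu0 (mu1 + attack eps mu1 mu0 + noise_vec N w)
                  <= cost eps mu1 (mu1 + attack eps mu1 mu0 + noise_vec N w))%R])%E).
Proof.
have P1 := @part1 R d eps.
split; first by move=> n e H; exact: P1.
split; first by move=> n e H; have := P1 mu0 mu1 n e heps H; lra.
split.
  move=> dT T P sigma N _ _ e H; apply: prob_le.
  - by apply: meas_lt; apply: cost_meas.
  - by apply: meas_lt; apply: cost_meas.
  - by move=> w /=; have := P1 mu0 mu1 (noise_vec N w) e heps H; lra.
split; first by move=> n e H; exact: P1.
split; first by move=> n e H; have := P1 mu1 mu0 n e heps H; lra.
move=> dT T P sigma N _ _ e H; apply: prob_le.
- by apply: meas_le; apply: cost_meas.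
- by apply: meas_le; apply: cost_meas.
- by move=> w /=; have := P1 mu1 mu0 (noise_vec N w) e heps H; lra.
Qed.
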